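(* Let $G$ be a two-player game with strategy sets $S_1,S_2$, utilities $u_1,u_2$, and a nonempty set $\mathrm{NE}$ of pure Nash equilibria taken as the solution set. Suppose that for all $x,x'\in S_1$ and $y,y'\in S_2$, $$u_1(x,y)\le u_1(x',y)\ \text{and}\ u_2(x,y)\le u_2(x,y')\ \Longrightarrow\ \mathrm{sw}(x,y)\le\mathrm{sw}(x',y)\ \text{or}\ \mathrm{sw}(x,y)\le\mathrm{sw}(x,y').$$ Then $\mathrm{PoTS}=\mathrm{PoS}$.
   Context: $\mathrm{sw}=u_1+u_2$, assumed to have positive maximum over $S_1\times S_2$; minima/maxima are read as infima/suprema if not attained. $T(\mathrm{NE})$ is the set of profiles $(x,y)$ such that $x$ is player 1's strategy in some element of $\mathrm{NE}$ and $y$ is player 2's strategy in some element of $\mathrm{NE}$. $\mathrm{PoS}=\max_{\mathrm{NE}}\mathrm{sw}/\max_S\mathrm{sw}$ and $\mathrm{PoTS}=\max_{T(\mathrm{NE})}\mathrm{sw}/\max_S\mathrm{sw}$. *)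

(* Defs.v *)
From mathcomp Require Import all_boot all_order all_algebra.
From mathcomp Require Import all_classical all_reals.
Set Implicit Arguments. Unset Strict Implicit. Unset Printing Implicit Defensive.
Import Order.TTheory GRing.Theory Num.Theory.
Local Open Scope classical_set_scope.
Local Open Scope ring_scope.

Section Game.
Variables (R : realType) (S1 S2 : Type).
Variables (u1 u2 : S1 -> S2 -> R).

Definition sw (x : S1) (y : S2) : R := u1 x y + u2 x y.

Definition NE : set (S1 * S2) :=
  [set p | (forall x', u1 x' p.2 <= u1 p.1 p.2) /\
           (forall y', u2 p.1 y' <= u2 p.1 p.2)].

Definition TNE : set (S1 * S2) :=
  [set p | (exists y, NE (p.1, y)) /\ (exists x, NE (x, p.2))].

(* maxima read as suprema *)
Definition opt_sw : R := sup [set sw p.1 p.2 | p in [set: S1 * S2]].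
Definition PoS : R := sup [set sw p.1 p.2 | p in NE] / opt_sw.
Definition PoTS : R := sup [set sw p.1 p.2 | p in TNE] / opt_sw.
End Game.

(* Main.v *)
Require Import Defs.
From mathcomp Require Import all_boot all_order all_algebra.
From mathcomp Require Import all_classical all_reals.
Import Order.TTheory GRing.Theory Num.Theory.
Local Open Scope classical_set_scope.
Local Open Scope ring_scope.

Theorem proposition4 (R : realType) (S1 S2 : Type) (u1 u2 : S1 -> S2 -> R) :
  (* sw has a (finite) positive maximum/supremum over S1 x S2 *)
  has_ubound [set sw u1 u2 p.1 p.2 | p in [set: S1 * S2]] ->
  0 < opt_sw u1 u2 ->
  (* the solution set NE is nonempty *)
  NE u1 u2 !=set0 ->
  (forall (x x' : S1) (y y' : S2),
      u1 x y <= u1 x' y -> u2 x y <= u2 x y' ->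
      sw u1 u2 x y <= sw u1 u2 x' y \/ sw u1 u2 x y <= sw u1 u2 x y') ->
  PoTS u1 u2 = PoS u1 u2.
Proof.
move=> hub _ [p0 hp0] H.
rewrite /PoTS /PoS; congr (_ / _).
set A := [set sw u1 u2 p.1 p.2 | p in TNE u1 u2].
set B := [set sw u1 u2 p.1 p.2 | p in NE u1 u2].
have hB : has_ubound B.
  by apply: subset_has_ubound hub => _ [p _ <-]; exists p.
have hA : has_ubound A.
  by apply: subset_has_ubound hub => _ [p _ <-]; exists p.
have NET : forall p, NE u1 u2 p -> TNE u1 u2 p.
  move=> [x y] hp; split; [by exists y | by exists x].
have neB : B !=set0 by exists (sw u1 u2 p0.1 p0.2); exists p0.
have neA : A !=set0 by exists (sw u1 u2 p0.1 p0.2); exists p0 => //; exact: NET.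
apply/eqP; rewrite eq_le; apply/andP; split.
- apply: ge_sup => // _ [[x y] [[y0 hy0] [x0 hx0]] <-] /=.
  have h1 : u1 x y <= u1 x0 y by case: hx0 => /= + _; apply.
  have h2 : u2 x y <= u2 x y0 by case: hy0 => /= _; apply.
  case: (H _ _ _ _ h1 h2) => hle; apply: le_trans hle _;
    apply: (ub_le_sup hB); [exists (x0, y) | exists (x, y0)] => //.
- apply: ge_sup => // _ [p hp <-].
  by apply: (ub_le_sup hA); exists p => //; exact: NET.
Qed.
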